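(* In the setting of the $i$-th horizontal composition (with $\psi$ dinatural in its $i$-th variable), if $\psi$ is also dinatural in its $j$-th variable for some $j\ne i$, then $\phi\ast_i\psi$ is dinatural in its variable $B_j$.
   Context: Notation: $k$ also denotes $\{1,\dots,k\}$; $\mathbb C^\alpha=\mathbb C^{\alpha_1}\times\cdots$ with $\mathbb C^+=\mathbb C$, $\mathbb C^-=\mathbb C^{op}$; for $\mathbf A=(A_1,\dots,A_n)$, $\sigma\colon k\to n$, $\mathbf A\sigma=(A_{\sigma1},\dots,A_{\sigma k})$; a morphism in a contravariant argument is read in $\mathbb C^{op}$. A transformation $\phi\colon F\to G$ ($F\colon\mathbb C^\alpha\to\mathbb C$, $G\colon\mathbb C^\beta\to\mathbb C$) of type $|\alpha|\xrightarrow{\sigma}n\xleftarrow{\tau}|\beta|$ is a family $\phi_{\mathbf A}\colon F(\mathbf A\sigma)\to G(\mathbf A\tau)$, $\mathbf A\in\mathrm{Ob}(\mathbb C)^n$. $\mathbf A[X,Y/i]\sigma$ is the tuple whose $j$-th entry is $X$ if $\sigma j=i,\alpha_j=-$, $Y$ if $\sigma j=i,\alpha_j=+$, $A_{\sigma j}$ (or $1_{A_{\sigma j}}$ for morphisms) otherwise; $\mathbf A[X/i]=\mathbf A[X,X/i]$. $\phi$ is dinatural in its $i$-th variable if for all $A_j$ ($j\ne i$) and $f\colon A\to B$: $G(\mathbf A[A,f/i]\tau)\circ\phi_{\mathbf A[A/i]}\circ F(\mathbf A[f,A/i]\sigma)=G(\mathbf A[f,B/i]\tau)\circ\phi_{\mathbf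 A[B/i]}\circ F(\mathbf A[B,f/i]\sigma)$. Horizontal composition: let $F\colon\mathbb C^\alpha\to\mathbb C$, $G\colon\mathbb C^\beta\to\mathbb C$, $H\colon\mathbb C^\gamma\to\mathbb C$, $K\colon\mathbb C^\delta\to\mathbb C$, $\phi\colon F\to G$ of type $|\alpha|\xrightarrow{\sigma}n\xleftarrow{\tau}|\beta|$ with variables $\mathbf A=(A_1,\dots,A_n)$, and $\psi\colon H\to K$ of type $|\gamma|\xrightarrow{\eta}m\xleftarrow{\theta}|\delta|$ with variables $\mathbf B=(B_1,\dots,B_m)$, dinatural in its $i$-th variable. The $i$-th horizontal composite $\phi\ast_i\psi$ is the transformation with variables $\mathbf B[\mathbf A/i]=(B_1,\dots,B_{i-1},A_1,\dots,A_n,B_{i+1},\dots,B_m)$ (so $A_k$ is its $(i-1+k)$-th variable). Its domain functor is obtained from $H$ by substituting, into each argument position $u$ with $\eta u=i$, the functor $F$ if $\gamma_u=+$ and $G^{op}$ if $\gamma_u=-$ (other positions unchanged); its codomain functor is obtained from $K$ by substituting, into each position $v$ with $\theta v=i$, $G$ if $\delta_v=+$ and $F^{op}$ if $\delta_v=-$. In its type, an argument coming from the $j$-th argument of a copy of $F$ is assigned variable $A_{\sigma j}$, one coming from the $j$-th argument of a copy of $G$ variable $A_{\tau j}$, and an unchanged position $u$ of $H$ (resp. $v$ of $K$) variable $B_{\eta u}$ (resp. $B_{\theta v}$). Its component at $\mathbf B[\mathbf A/i]$ is the morphism $H(\mathbf B[G(\mathbf A\tau),F(\mathbf A\sigma)/i]\eta)\to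 K(\mathbf B[F(\mathbf A\sigma),G(\mathbf A\tau)/i]\theta)$ given by $K(\mathbf B[F(\mathbf A\sigma),\phi_{\mathbf A}/i]\theta)\circ\psi_{\mathbf B[F(\mathbf A\sigma)/i]}\circ H(\mathbf B[\phi_{\mathbf A},F(\mathbf A\sigma)/i]\eta)$, equal to $K(\mathbf B[\phi_{\mathbf A},G(\mathbf A\tau)/i]\theta)\circ\psi_{\mathbf B[G(\mathbf A\tau)/i]}\circ H(\mathbf B[G(\mathbf A\tau),\phi_{\mathbf A}/i]\eta)$ by dinaturality of $\psi$. Dinaturality of $\phi\ast_i\psi$ in a variable is in the sense above applied to this transformation. *)

(* Defs.v *)
From mathcomp Require Import all_boot.
Unset Printing Implicit Defensive.

(* Categories, presented single-sorted: objects, arrows, domain/codomain,   *)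
(* identities and composition ([comp g f] = g o f; it is only meaningful    *)
(* when [cod f = dom g]).  Hom(a,b) = { f | dom f = a /\ cod f = b }.       *)
Record Cat := {
  Ob : Type;
  Arr : Type;
  dom : Arr -> Ob;
  cod : Arr -> Ob;
  idc : Ob -> Arr;
  comp : Arr -> Arr -> Arr;
  dom_id : forall a, dom (idc a) = a;
  cod_id : forall a, cod (idc a) = a;
  dom_comp : forall f g, cod f = dom g -> dom (comp g f) = dom f;
  cod_comp : forall f g, cod f = dom g -> cod (comp g f) = cod g;
  comp_id_l : forall f, comp (idc (cod f)) f = f;
  comp_id_r : forall f, comp f (idc (dom f)) = f;
  comp_assoc : forall f g h, cod f = dom g -> cod g = dom h ->
     comp h (comp g f) = comp (comp h g) f }.
Arguments dom {c} _.
Arguments cod {c} _.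
Arguments idc {c} _.
Arguments comp {c} _ _.

(* Mixed-variance functors  F : C^a -> C,  argument positions indexed by P, *)
(* a p = true  means position p is covariant (C^+ = C),                      *)
(* a p = false means position p is contravariant (C^- = C^op).               *)
(* A morphism of C^a is a family of arrows f p; at a contravariant position *)
(* the arrow f p of C is read in C^op (so it goes from cod (f p) to dom).   *)
Record MFunctor (C : Cat) (P : Type) (a : P -> bool) := {
  fob : (P -> Ob C) -> Ob C;
  fmor : (P -> Arr C) -> Arr C;
  fmor_dom : forall f,
    dom (fmor f) = fob (fun p => if a p then dom (f p) else cod (f p));
  fmor_cod : forall f,
    cod (fmor f) = fob (fun p => if a p then cod (f p) else dom (f p));
  fmor_id : forall S, fmor (fun p => idc (S p)) = idc (fob S);
  fmor_comp : forall f g,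
    (forall p, if a p then cod (f p) = dom (g p) else cod (g p) = dom (f p)) ->
    fmor (fun p => if a p then comp (g p) (f p) else comp (f p) (g p))
    = comp (fmor g) (fmor f) }.
Arguments MFunctor C {P} a.
Arguments fob {C P a} _ _.
Arguments fmor {C P a} _ _.

Section Defs.
Context {C : Cat}.

Definition upd {V : eqType} (A : V -> Ob C) (i : V) (X : Ob C) : V -> Ob C :=
  fun m => if m == i then X else A m.

(* The morphism family  A[fn, fp / i] s  (argument positions P, variance a,
   type s : P -> V): at a position p with s p = i it is fn if p is
   contravariant and fp if p is covariant; elsewhere it is 1_{A (s p)}. *)
Definition msub {P : Type} {V : eqType} (a : P -> bool) (s : P -> V)
  (A : V -> Ob C) (i : V) (fn fp : Arr C) : P -> Arr C :=
  fun p => if s p == i then (if a p then fp else fn) else idc (A (s p)).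

Definition is_transf {P Q : Type} {V : eqType} {a : P -> bool} {b : Q -> bool}
  (F : MFunctor C a) (G : MFunctor C b) (s : P -> V) (t : Q -> V)
  (phi : (V -> Ob C) -> Arr C) : Prop :=
  forall A : V -> Ob C,
    dom (phi A) = fob F (fun p => A (s p)) /\ cod (phi A) = fob G (fun q => A (t q)).

(* Dinaturality in the i-th variable (as in the paper): for every tuple A
   (its i-th entry being irrelevant) and f : X -> Y,
   G(A[X,f/i]t) o phi_{A[X/i]} o F(A[f,X/i]s)
     = G(A[f,Y/i]t) o phi_{A[Y/i]} o F(A[Y,f/i]s).
   Only the actions on morphisms of the functors are involved. *)
Definition dinatural {P Q : Type} {V : eqType} (a : P -> bool) (b : Q -> bool)
  (s : P -> V) (t : Q -> V)
  (Fm : (P -> Arr C) -> Arr C) (Gm : (Q -> Arr C) -> Arr C)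
  (phi : (V -> Ob C) -> Arr C) (i : V) : Prop :=
  forall (A : V -> Ob C) (X Y : Ob C) (f : Arr C), dom f = X -> cod f = Y ->
    comp (comp (Gm (msub b t A i (idc X) f)) (phi (upd A i X)))
         (Fm (msub a s A i f (idc X)))
    = comp (comp (Gm (msub b t A i f (idc Y))) (phi (upd A i Y)))
           (Fm (msub a s A i (idc Y) f)).

(* psi has variables V (the B's), phi has variables W (the A's).  The       *)
(* variables of the composite, B[A/i], are  {m : V | m != i} + W :          *)
(* inl m is B_m (m <> i) and inr w is A_w.                                  *)
Definition hvar {V : eqType} (W : eqType) (i : V) : eqType := ({m : V | m != i} + W)%type.

(* Substituting into a functor H (positions PH, variance g, type e : PH -> V)
   the functor with positions P1 into every covariant position u with e u = i
   and the functor with positions P2 into every contravariant position u with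
   e u = i. *)
Definition slot (P1 P2 : Type) (b c : bool) : Type :=
  if b then (if c then P1 else P2) else unit.

Definition spos {V : eqType} {PH : Type} (P1 P2 : Type) (g : PH -> bool) (e : PH -> V)
  (i : V) : Type := {u : PH & slot P1 P2 (e u == i) (g u)}.

(* variance of the substituted functor; the functor put in a contravariant
   slot appears as its opposite, so its variances are flipped *)
Definition svar {V : eqType} {PH P1 P2 : Type} (g : PH -> bool) (e : PH -> V)
  (i : V) (a1 : P1 -> bool) (a2 : P2 -> bool) (x : spos P1 P2 g e i) : bool :=
  let (u, y) := x in
  (match e u == i as b return slot P1 P2 b (g u) -> bool with
   | true => match g u as c return slot P1 P2 true c -> bool with
             | true => fun p => a1 p
             | false => fun q => ~~ a2 q
             end
   | false => fun _ => g u
   end) y.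

Definition stype {V W : eqType} {PH P1 P2 : Type} (g : PH -> bool) (e : PH -> V)
  (i : V) (s1 : P1 -> W) (s2 : P2 -> W) (x : spos P1 P2 g e i) : hvar W i :=
  let (u, y) := x in
  (match e u == i as b return (e u == i) = b -> slot P1 P2 b (g u) -> hvar W i with
   | true => fun _ =>
       match g u as c return slot P1 P2 true c -> hvar W i with
       | true => fun p => inr (s1 p)
       | false => fun q => inr (s2 q)
       end
   | false => fun E _ => inl (exist (fun m => m != i) (e u) (negbT E))
   end) (erefl (e u == i)) y.

(* action on morphisms of the substituted functor H[m1 / cov i, m2 / contra i]
   (the opposite of a functor has the same action on arrows) *)
Definition smor {V : eqType} {PH P1 P2 : Type} (g : PH -> bool) (e : PH -> V)
  (i : V) (Hm : (PH -> Arr C) -> Arr C)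
  (m1 : (P1 -> Arr C) -> Arr C) (m2 : (P2 -> Arr C) -> Arr C)
  (f : spos P1 P2 g e i -> Arr C) : Arr C :=
  Hm (fun u =>
    (match e u == i as b return (slot P1 P2 b (g u) -> Arr C) -> Arr C with
     | true => match g u as c return (slot P1 P2 true c -> Arr C) -> Arr C with
               | true => m1
               | false => m2
               end
     | false => fun h => h tt
     end) (fun y => f (existT _ u y))).

Definition sob {V : eqType} {PH P1 P2 : Type} (g : PH -> bool) (e : PH -> V)
  (i : V) (Ho : (PH -> Ob C) -> Ob C)
  (o1 : (P1 -> Ob C) -> Ob C) (o2 : (P2 -> Ob C) -> Ob C)
  (S : spos P1 P2 g e i -> Ob C) : Ob C :=
  Ho (fun u =>
    (match e u == i as b return (slot P1 P2 b (g u) -> Ob C) -> Ob C with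
     | true => match g u as c return (slot P1 P2 true c -> Ob C) -> Ob C with
               | true => o1
               | false => o2
               end
     | false => fun h => h tt
     end) (fun y => S (existT _ u y))).

Definition bsub {V W : eqType} {i : V} (Z : hvar W i -> Ob C) (X : Ob C) :
  V -> Ob C :=
  fun m => (match m != i as b return (m != i) = b -> Ob C with
            | true => fun E => Z (inl (exist (fun m => m != i) m E))
            | false => fun _ => X
            end) (erefl (m != i)).

Definition hcomp {PF PG PH PK : Type} {V W : eqType}
  {al : PF -> bool} {be : PG -> bool} {ga : PH -> bool} {de : PK -> bool}
  (F : MFunctor C al) (G : MFunctor C be) (H : MFunctor C ga) (K : MFunctor C de)
  (s : PF -> W) (eta : PH -> V) (th : PK -> V)
  (phi : (W -> Ob C) -> Arr C) (psi : (V -> Ob C) -> Arr C) (i : V)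
  (Z : hvar W i -> Ob C) : Arr C :=
  let A := fun w => Z (inr w) in
  let FA := fob F (fun p => A (s p)) in
  let B := bsub Z FA in
  comp (comp (fmor K (msub de th B i (idc FA) (phi A))) (psi B))
       (fmor H (msub ga eta B i (phi A) (idc FA))).

End Defs.

(* Main.v *)
From Pilot Require Import Defs.
From mathcomp Require Import all_boot.
From Stdlib Require Import FunctionalExtensionality.
Import Pilot.Defs.

Definition fam {C : Cat} {P : Type} {V : eqType} (i j : V) (g : P -> bool)
  (e : P -> V) (B : V -> Ob C) (ain aip ajn ajp : Arr C) : P -> Arr C :=
  fun u => if e u == i then (if g u then aip else ain)
           else if e u == j then (if g u then ajp else ajn) else idc (B (e u)).

Lemma idc_comp (C : Cat) (x : Ob C) : comp (idc x) (idc x) = idc x.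
Proof. have := comp_id_l C (idc x). by rewrite cod_id. Qed.

Lemma comp_idl' (C : Cat) (f : Arr C) x : cod f = x -> comp (idc x) f = f.
Proof. by move<-; apply (comp_id_l C). Qed.
Lemma comp_idr' (C : Cat) (f : Arr C) x : dom f = x -> comp f (idc x) = f.
Proof. by move<-; apply (comp_id_r C). Qed.

Lemma fam_comp (C : Cat) (P : Type) (V : eqType) (i j : V) (a : P -> bool)
  (M : MFunctor C a) (e : P -> V) B x1 x2 x3 x4 y1 y2 y3 y4 :
  cod y1 = dom x1 -> cod x2 = dom y2 -> cod y3 = dom x3 -> cod x4 = dom y4 ->
  comp (fmor M (fam i j a e B y1 y2 y3 y4)) (fmor M (fam i j a e B x1 x2 x3 x4))
  = fmor M (fam i j a e B (comp x1 y1) (comp y2 x2) (comp x3 y3) (comp y4 x4)).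
Proof.
move=> h1 h2 h3 h4; rewrite -(fmor_comp _ _ _ M); last first.
  move=> p; rewrite /fam; case: (e p == i); case: (a p) => //;
  case: (e p == j) => //; by rewrite cod_id dom_id.
congr (fmor M); apply functional_extensionality => p; rewrite /fam.
case: (e p == i); case: (a p) => //; case: (e p == j) => //; by rewrite idc_comp.
Qed.

Lemma fam_compat (C : Cat) (P : Type) (V : eqType) (i j : V) (a : P -> bool)
  (M : MFunctor C a) (e : P -> V) B x1 x2 x3 x4 y1 y2 y3 y4 :
  cod y1 = dom x1 -> cod x2 = dom y2 -> cod y3 = dom x3 -> cod x4 = dom y4 ->
  cod (fmor M (fam i j a e B x1 x2 x3 x4)) = dom (fmor M (fam i j a e B y1 y2 y3 y4)).
Proof.
move=> h1 h2 h3 h4; rewrite fmor_cod fmor_dom; congr (fob M);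
apply functional_extensionality => p; rewrite /fam.
case: (e p == i); case: (a p) => //; case: (e p == j) => //; by rewrite cod_id dom_id.
Qed.

Lemma msub_i_fam (C : Cat) (P : Type) (V : eqType) (i j : V) (a : P -> bool)
  (e : P -> V) (B : V -> Ob C) x y :
  msub a e B i x y = fam i j a e B x y (idc (B j)) (idc (B j)).
Proof.
apply functional_extensionality => p; rewrite /msub /fam.
case: (e p == i) => //; case E: (e p == j) => //; rewrite (eqP E); by case: (a p).
Qed.

Lemma msub_j_fam (C : Cat) (P : Type) (V : eqType) (i j : V) (Hji : j != i) (a : P -> bool)
  (e : P -> V) (B : V -> Ob C) x y :
  msub a e B j x y = fam i j a e B (idc (B i)) (idc (B i)) x y.
Proof.
apply functional_extensionality => p; rewrite /msub /fam.
case E: (e p == i).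
  rewrite (eqP E) eq_sym (negbTE Hji); by case: (a p).
by [].
Qed.

Lemma fam_upd (C : Cat) (P : Type) (V : eqType) (i j : V) (a : P -> bool)
  (e : P -> V) (B : V -> Ob C) X x1 x2 x3 x4 :
  fam i j a e (upd B j X) x1 x2 x3 x4 = fam i j a e B x1 x2 x3 x4.
Proof.
apply functional_extensionality => p; rewrite /fam /upd.
case: (e p == i) => //; by case E: (e p == j).
Qed.

Lemma msub_dom (C : Cat) (P : Type) (V : eqType) (a : P -> bool) (M : MFunctor C a)
  (s : P -> V) (B : V -> Ob C) k x y X :
  dom y = X -> cod x = X -> dom (fmor M (msub a s B k x y)) = fob M (fun p => upd B k X (s p)).
Proof.
move=> h1 h2; rewrite fmor_dom; congr (fob M); apply functional_extensionality => p.
rewrite /msub /upd; case: (s p == k); case: (a p); by rewrite ?dom_id ?cod_id.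
Qed.

Lemma msub_cod (C : Cat) (P : Type) (V : eqType) (a : P -> bool) (M : MFunctor C a)
  (s : P -> V) (B : V -> Ob C) k x y X :
  cod y = X -> dom x = X -> cod (fmor M (msub a s B k x y)) = fob M (fun p => upd B k X (s p)).
Proof.
move=> h1 h2; rewrite fmor_cod; congr (fob M); apply functional_extensionality => p.
rewrite /msub /upd; case: (s p == k); case: (a p); by rewrite ?dom_id ?cod_id.
Qed.

Lemma upd_id (C : Cat) (V : eqType) (B : V -> Ob C) k X : B k = X -> upd B k X = B.
Proof.
move=> h; apply functional_extensionality => m; rewrite /upd; case: eqP => // ->; by [].
Qed.

Lemma bsub_ne (C : Cat) (V W : eqType) (i : V) (Z : hvar W i -> Ob C) X m (E : m != i) :
  bsub Z X m = Z (inl (exist _ m E)).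
Proof.
rewrite /bsub.
have gen : forall b (H : (m != i) = b),
  (if b as b0 return (m != i) = b0 -> Ob C
   then fun E0 => Z (inl (exist _ m E0)) else fun _ => X) H = Z (inl (exist _ m E)).
  case=> H; [by rewrite (bool_irrelevance H E) | by rewrite E in H].
exact: gen.
Qed.

Lemma bsub_eq (C : Cat) (V W : eqType) (i : V) (Z : hvar W i -> Ob C) X :
  bsub Z X i = X.
Proof.
rewrite /bsub.
have gen : forall b (H : (i != i) = b),
  (if b as b0 return (i != i) = b0 -> Ob C
   then fun E0 => Z (inl (exist _ i E0)) else fun _ => X) H = X.
  case=> H //; have := H; by rewrite eqxx.
exact: gen.
Qed.

Lemma hvar_eq (V W : eqType) (i : V) m j (E : m != i) (E' : j != i) :
  ((inl (exist _ m E) : hvar W i) == inl (exist _ j E')) = (m == j).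
Proof. by []. Qed.

Lemma hvar_eqr (V W : eqType) (i : V) w z :
  ((inr w : hvar W i) == inl z) = false.
Proof. by []. Qed.

Lemma smor_fam (C : Cat) (V W : eqType) (PH P1 P2 : Type) (i j : V) (Hji : j != i)
  (g : PH -> bool) (e : PH -> V) (a1 : P1 -> bool) (a2 : P2 -> bool)
  (Hm : (PH -> Arr C) -> Arr C) (M1 : MFunctor C a1) (M2 : MFunctor C a2)
  (s1 : P1 -> W) (s2 : P2 -> W) (Z : hvar W i -> Ob C) X0 fn fp :
  smor g e i Hm (fmor M1) (fmor M2)
    (msub (svar g e i a1 a2) (stype g e i s1 s2) Z (inl (exist _ j Hji)) fn fp)
  = Hm (fam i j g e (bsub Z X0) (idc (fob M2 (fun q => Z (inr (s2 q)))))
          (idc (fob M1 (fun p => Z (inr (s1 p))))) fn fp).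
Proof.
rewrite /smor; congr Hm; apply functional_extensionality => u.
rewrite /fam /msub /stype /svar /=.
have gen : forall b (H : (e u == i) = b),
  (if b as b0 return ((slot P1 P2 b0 (g u) -> Arr C) -> Arr C)
   then if g u as c return (((if c then P1 else P2) -> Arr C) -> Arr C)
        then fmor M1 else fmor M2
   else @^~ tt)
  (fun y : slot P1 P2 b (g u) =>
    let st := (if b as b0
        return ((e u == i) = b0 -> slot P1 P2 b0 (g u) -> hvar W i)
       then fun _ => (if g u as c return ((if c then P1 else P2) -> hvar W i)
               then fun p : P1 => inr (s1 p)
               else fun q : P2 => inr (s2 q))
       else fun (E : (e u == i) = false) _ =>
               inl (exist (fun m : V => m != i) (e u) (negbT E))) H y in
    let sv := (if b as b0 return (slot P1 P2 b0 (g u) -> bool)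
        then if g u as c return ((if c then P1 else P2) -> bool)
             then a1 else fun q : P2 => ~~ a2 q
        else fun _ => g u) y in
    if st == inl (exist (fun x : V => x != i) j Hji)
    then (if sv then fp else fn) else idc (Z st))
  = if b then (if g u then idc (fob M1 (fun p => Z (inr (s1 p))))
               else idc (fob M2 (fun q => Z (inr (s2 q)))))
    else if e u == j then (if g u then fp else fn) else idc (bsub Z X0 (e u)).
  case=> H.
    case: (g u).
      exact: (fmor_id _ _ _ M1 (fun p => Z (inr (s1 p)))).
    exact: (fmor_id _ _ _ M2 (fun p => Z (inr (s2 p)))).
  rewrite /= hvar_eq (bsub_ne _ _ _ _ _ _ _ (negbT H)).
  done.
exact: (gen _ erefl).
Qed.

Lemma assocR (C : Cat) (f g h : Arr C) : cod f = dom g -> cod g = dom h ->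
  comp (comp h g) f = comp h (comp g f).
Proof. by move=> h1 h2; rewrite comp_assoc. Qed.

Lemma rearr (C : Cat) (a b c d e a2 a1 d2 d1 : Arr C) :
  comp a b = comp a2 a1 -> comp d e = comp d2 d1 ->
  cod e = dom d -> cod d = dom c -> cod c = dom b -> cod b = dom a ->
  cod d1 = dom d2 -> cod a1 = dom a2 -> cod c = dom a1 -> cod d2 = dom c ->
  comp (comp a (comp (comp b c) d)) e = comp a2 (comp (comp (comp a1 c) d2) d1).
Proof.
move=> ab de h1 h2 h3 h4 h5 h6 h7 h8.
have dbc : dom (comp b c) = dom c by rewrite dom_comp.
have cbc : cod (comp b c) = cod b by rewrite cod_comp.
have dd21 : cod (comp d2 d1) = cod d2 by rewrite cod_comp.
rewrite (assocR _ e); last 2 first.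
- by rewrite dom_comp ?dbc.
- by rewrite cod_comp ?cbc // dbc.
rewrite (assocR _ e d (comp b c)) ?dbc // de.
rewrite (assocR _ (comp d2 d1) c b) ?dd21 //.
rewrite comp_assoc ?cod_comp ?dd21 // ab.
rewrite (assocR _ _ a1 a2) ?cod_comp ?dd21 //.
have da1c : dom (comp a1 c) = dom c by rewrite dom_comp.
rewrite (assocR _ d1 d2 (comp a1 c)) ?da1c //.
by rewrite (assocR _ (comp d2 d1) c a1) ?dd21.
Qed.

Lemma bsub_upd (C : Cat) (V W : eqType) (i j : V) (Hji : j != i) (Z : hvar W i -> Ob C) X FA :
  bsub (upd Z (inl (exist _ j Hji)) X) FA = upd (bsub Z FA) j X.
Proof.
apply functional_extensionality => m.
case: (eqVneq m i) => [->|E].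
  by rewrite /upd eq_sym (negbTE Hji) !bsub_eq.
rewrite !(bsub_ne _ _ _ _ _ _ _ E) /upd hvar_eq.
by rewrite (bsub_ne _ _ _ _ _ _ _ E).
Qed.

Lemma fam_i_upd (C : Cat) (P : Type) (V : eqType) (i j : V) (Hji : j != i) (a : P -> bool)
  (e : P -> V) (B : V -> Ob C) X x y :
  msub a e (upd B j X) i x y = fam i j a e B x y (idc X) (idc X).
Proof. by rewrite (msub_i_fam _ _ _ i j) fam_upd /upd eqxx. Qed.

Lemma hcomp_upd (C : Cat) (PF PG PH PK : Type) (V W : eqType)
  (al : PF -> bool) (be : PG -> bool) (ga : PH -> bool) (de : PK -> bool)
  (F : MFunctor C al) (G : MFunctor C be) (H : MFunctor C ga) (K : MFunctor C de)
  (s : PF -> W) (eta : PH -> V) (th : PK -> V)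
  (phi : (W -> Ob C) -> Arr C) (psi : (V -> Ob C) -> Arr C) (i j : V) (Hji : j != i)
  (Z : hvar W i -> Ob C) X :
  hcomp F G H K s eta th phi psi i (upd Z (inl (exist _ j Hji)) X)
  = comp (comp (fmor K (msub de th (upd (bsub Z (fob F (fun p => Z (inr (s p))))) j X) i
                 (idc (fob F (fun p => Z (inr (s p))))) (phi (fun w => Z (inr w)))))
               (psi (upd (bsub Z (fob F (fun p => Z (inr (s p))))) j X)))
         (fmor H (msub ga eta (upd (bsub Z (fob F (fun p => Z (inr (s p))))) j X) i
                 (phi (fun w => Z (inr w))) (idc (fob F (fun p => Z (inr (s p))))))).
Proof.
rewrite /hcomp.
change (fun w => upd Z (inl (exist _ j Hji)) X (inr w)) with (fun w => Z (inr w)).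
by rewrite bsub_upd.
Qed.

Theorem mainTheorem9 (C : Cat) (PF PG PH PK : finType) (V W : finType)
  (al : PF -> bool) (be : PG -> bool) (ga : PH -> bool) (de : PK -> bool)
  (F : MFunctor C al) (G : MFunctor C be) (H : MFunctor C ga) (K : MFunctor C de)
  (s : PF -> W) (t : PG -> W) (eta : PH -> V) (th : PK -> V)
  (phi : (W -> Ob C) -> Arr C) (psi : (V -> Ob C) -> Arr C)
  (Hphi : is_transf F G s t phi) (Hpsi : is_transf H K eta th psi)
  (i j : V) (Hji : j != i)
  (dpsi_i : dinatural ga de eta th (fmor H) (fmor K) psi i)
  (dpsi_j : dinatural ga de eta th (fmor H) (fmor K) psi j) :
  dinatural
    (svar ga eta i al be) (svar de th i be al)
    (stype ga eta i s t) (stype de th i t s)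
    (smor ga eta i (fmor H) (fmor F) (fmor G))
    (smor de th i (fmor K) (fmor G) (fmor F))
    (hcomp F G H K s eta th phi psi i)
    (inl (exist (fun m => m != i) j Hji)).
Proof.
move=> Z X Y f hX hY.
rewrite !(hcomp_upd _ _ _ _ _ _ _ _ _ _ _ _ _ _ _ _ _ _ _ _ _ _ Hji).
set FA := fob F (fun p => Z (inr (s p))).
set A := fun w => Z (inr w).
set GA := fob G (fun q => Z (inr (t q))).
set phA := phi A.
set B0 := bsub Z FA.
have [dphA cphA] := Hphi A.
rewrite !(smor_fam _ _ _ _ _ _ _ _ Hji _ _ _ _ _ _ _ _ _ _ FA).
rewrite -/B0 -/GA.
change (fob F (fun q : PF => Z (inr (s q)))) with FA.
have B0i : B0 i = FA by rewrite /B0 bsub_eq.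
have Uupd : forall Q, upd B0 j Q i = FA by move=> Q; rewrite /upd eq_sym (negbTE Hji).
have Ux : forall Q, upd (upd B0 j Q) i FA = upd B0 j Q.
  by move=> Q; apply: upd_id; apply: Uupd.
have fK := fam_comp _ _ _ i j _ K th B0.
have fH := fam_comp _ _ _ i j _ H eta B0.
have cK := fam_compat _ _ _ i j _ K th B0.
have cH := fam_compat _ _ _ i j _ H eta B0.
rewrite (rearr _ _ _ _ _ _
  (fmor K (fam i j de th B0 (idc FA) phA (idc X) (idc Y)))
  (fmor K (msub de th B0 j (idc X) f))
  (fmor H (msub ga eta B0 j f (idc X)))
  (fmor H (fam i j ga eta B0 phA (idc FA) (idc Y) (idc X)))).
rewrite [RHS](rearr _ _ _ _ _ _
  (fmor K (fam i j de th B0 (idc FA) phA (idc X) (idc Y)))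
  (fmor K (msub de th B0 j f (idc Y)))
  (fmor H (msub ga eta B0 j (idc Y) f))
  (fmor H (fam i j ga eta B0 phA (idc FA) (idc Y) (idc X)))).
  by rewrite (dpsi_j B0 X Y f hX hY).
all: try by rewrite (proj1 (Hpsi _)) (msub_cod _ _ _ _ _ _ _ _ _ _ FA) ?Ux ?cod_id ?dom_id ?dphA ?cphA.
all: try by rewrite (proj1 (Hpsi _)) (msub_cod _ _ _ _ _ _ _ _ _ _ X) ?cod_id ?dom_id.
all: try by rewrite (proj1 (Hpsi _)) (msub_cod _ _ _ _ _ _ _ _ _ _ Y) ?cod_id ?dom_id.
all: try by rewrite (proj2 (Hpsi _)) (msub_dom _ _ _ _ _ _ _ _ _ _ FA) ?Ux ?cod_id ?dom_id ?dphA ?cphA.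
all: try by rewrite (proj2 (Hpsi _)) (msub_dom _ _ _ _ _ _ _ _ _ _ X) ?cod_id ?dom_id.
all: try by rewrite (proj2 (Hpsi _)) (msub_dom _ _ _ _ _ _ _ _ _ _ Y) ?cod_id ?dom_id.
all: rewrite ?(msub_j_fam _ _ _ i j Hji) ?B0i ?(fam_i_upd _ _ _ i j Hji).
all: try by (apply: cK || apply: cH); rewrite ?cod_id ?dom_id.
all: first [rewrite !fK | rewrite !fH]; rewrite ?idc_comp ?(comp_idr' _ phA FA dphA) ?(comp_idl' _ phA GA cphA) ?(comp_idr' _ f X hX) ?(comp_idl' _ f Y hY) ?cod_id ?dom_id ?dphA ?cphA ?hX ?hY //.
Qed.
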